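(* Every strictly positive formula $A$ is $\mathbf{RJ}$-equivalent (i.e. $A\vdash_{\mathbf{RJ}}A'$ and $A'\vdash_{\mathbf{RJ}}A$) to an ordered formula $A'$.
   Context: Strictly positive formulas: $A::= p\mid \top\mid (A\land B)\mid \alpha A$, $\alpha\le\omega$. $\mathbf{RJ}$: $A\vdash A$; $A\vdash\top$; cut; $A\land B\vdash A$; $A\land B\vdash B$; from $A\vdash B$, $A\vdash C$ infer $A\vdash B\land C$; from $A\vdash B$ infer $\alpha A\vdash\alpha B$; $\alpha\alpha A\vdash\alpha A$; $\alpha\beta A\vdash\beta A$, $\beta\alpha A\vdash\beta A$ for $\alpha\ge\beta$; $\alpha A\land\beta B\vdash\alpha(A\land\beta B)$ for $\alpha>\beta$. ${\mathcal L}_{\ge m}$ is the set of strictly positive formulas all of whose modalities lie in $[m,\omega]$. A fact is $\top$ or a conjunction of variables. Ordered formulas are defined inductively: $A$ is ordered if $A=F\land\bigwedge_{i<k}m_iA_i$ for some $k\ge0$ (with $A=F$ if $k=0$), where $F$ is a fact, each $A_i\in{\mathcal L}_{\ge m_i}$ is ordered, and $m_0\ge m_1\ge\dots\ge m_{k-1}$. *)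

(* Defs.v *)
From Stdlib Require Import List Arith.
Import ListNotations.

(* Modalities: ordinals alpha <= omega, i.e. natural numbers together with omega. *)
Inductive md : Type := Fin (n : nat) | Om.

Definition md_le (a b : md) : Prop :=
  match a, b with
  | Fin n, Fin m => n <= m
  | _, Om => True
  | Om, Fin _ => False
  end.

Definition md_lt (a b : md) : Prop := md_le a b /\ a <> b.

Inductive fm : Type :=
| Var (p : nat)
| Top
| And (A B : fm)
| Dia (a : md) (A : fm).

Inductive RJ : fm -> fm -> Prop :=
| rj_refl A : RJ A A
| rj_top A : RJ A Top
| rj_cut A B C : RJ A B -> RJ B C -> RJ A C
| rj_andl A B : RJ (And A B) A
| rj_andr A B : RJ (And A B) B
| rj_andI A B C : RJ A B -> RJ A C -> RJ A (And B C)
| rj_mono a A B : RJ A B -> RJ (Dia a A) (Dia a B)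
| rj_trans a A : RJ (Dia a (Dia a A)) (Dia a A)
| rj_mon1 a b A : md_le b a -> RJ (Dia a (Dia b A)) (Dia b A)
| rj_mon2 a b A : md_le b a -> RJ (Dia b (Dia a A)) (Dia b A)
| rj_J a b A B : md_lt b a -> RJ (And (Dia a A) (Dia b B)) (Dia a (And A (Dia b B))).

Definition rj_equiv (A B : fm) : Prop := RJ A B /\ RJ B A.

(* A lies in L_{>= m}: all modalities of A lie in [m, omega]. *)
Fixpoint in_L_ge (m : md) (A : fm) : Prop :=
  match A with
  | Var _ => True
  | Top => True
  | And B C => in_L_ge m B /\ in_L_ge m C
  | Dia a B => md_le m a /\ in_L_ge m B
  end.

(* Conjunction of variables (with arbitrary bracketing, at least one variable). *)
Fixpoint var_conj (A : fm) : Prop :=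
  match A with
  | Var _ => True
  | And B C => var_conj B /\ var_conj C
  | _ => False
  end.

Definition is_fact (F : fm) : Prop := F = Top \/ var_conj F.

(* m_0 A_0 /\ (m_1 A_1 /\ (... /\ m_{k-1} A_{k-1})), for k >= 1 *)
Fixpoint big_dia (d : md * fm) (l : list (md * fm)) : fm :=
  match l with
  | [] => Dia (fst d) (snd d)
  | d' :: l' => And (Dia (fst d) (snd d)) (big_dia d' l')
  end.

(* F /\ /\_{i<k} m_i A_i, which is F when k = 0 *)
Definition build (F : fm) (l : list (md * fm)) : fm :=
  match l with
  | [] => F
  | d :: l' => And F (big_dia d l')
  end.

Fixpoint nonincr (l : list md) : Prop :=
  match l with
  | a :: ((b :: _) as l') => md_le b a /\ nonincr l'
  | _ => True
  end.

Inductive ordered : fm -> Prop :=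
| ordered_mk (F : fm) (l : list (md * fm)) :
    is_fact F ->
    (forall d, In d l -> ordered (snd d) /\ in_L_ge (fst d) (snd d)) ->
    nonincr (map fst l) ->
    ordered (build F l).

(* Main.v *)
Require Import Defs.
From Stdlib Require Import List Arith Lia.
Import ListNotations.

Definition md_leb (a b : md) : bool :=
  match a, b with
  | Fin n, Fin m => Nat.leb n m
  | _, Om => true
  | Om, Fin _ => false
  end.

Lemma md_leb_iff a b : md_leb a b = true <-> md_le a b.
Proof. destruct a, b; simpl; try rewrite Nat.leb_le; intuition; discriminate. Qed.

Lemma md_le_refl a : md_le a a.
Proof. destruct a; simpl; auto. Qed.

Lemma md_le_trans a b c : md_le a b -> md_le b c -> md_le a c.
Proof. destruct a, b, c; simpl; intuition lia. Qed.

Lemma md_leb_false a b : md_leb a b = false -> md_le b a /\ ~ md_le a b.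
Proof. intro H. split.
 - destruct a, b; simpl in *; try discriminate; auto. apply Nat.leb_gt in H. lia.
 - intro H'. apply md_leb_iff in H'. congruence.
Qed.

Lemma not_le_lt a b : ~ md_le a b -> md_lt b a.
Proof. intros H. destruct (md_leb a b) eqn:E.
 - apply md_leb_iff in E; contradiction.
 - apply md_leb_false in E. split; [tauto|]. intros ->. apply H, md_le_refl.
Qed.

Fixpoint bigand (L : list fm) : fm :=
  match L with [] => Top | x :: L' => And x (bigand L') end.

Lemma bigand_elim L x : In x L -> RJ (bigand L) x.
Proof. induction L; simpl; intros H; [contradiction|]. destruct H as [<-|H].
 - apply rj_andl.
 - eapply rj_cut; [apply rj_andr| auto]. Qed.

Lemma bigand_intro A L : (forall x, In x L -> RJ A x) -> RJ A (bigand L).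
Proof. induction L; simpl; intros H. apply rj_top. apply rj_andI; auto. Qed.

Lemma bigand_incl L L' : incl L' L -> RJ (bigand L) (bigand L').
Proof. intros H. apply bigand_intro. intros x Hx. apply bigand_elim; auto. Qed.

Lemma bigand_app_r L1 L2 L : incl L (L1 ++ L2) -> RJ (And (bigand L1) (bigand L2)) (bigand L).
Proof. intros H. apply bigand_intro. intros x Hx. apply H, in_app_or in Hx. destruct Hx.
 - eapply rj_cut; [apply rj_andl| apply bigand_elim; auto].
 - eapply rj_cut; [apply rj_andr| apply bigand_elim; auto]. Qed.

Lemma bigand_app_l L1 L2 : RJ (bigand (L1 ++ L2)) (And (bigand L1) (bigand L2)).
Proof. apply rj_andI; apply bigand_incl; intros x Hx; apply in_or_app; auto. Qed.

Fixpoint flat (A : fm) : list fm :=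
  match A with And B C => flat B ++ flat C | Top => [] | x => [x] end.

Lemma flat_to A : RJ A (bigand (flat A)).
Proof. induction A; simpl.
 - apply rj_andI; [apply rj_refl| apply rj_top].
 - apply rj_refl.
 - eapply rj_cut; [| apply bigand_app_r with (L1 := flat A1) (L2 := flat A2); apply incl_refl].
   apply rj_andI.
   + eapply rj_cut; [apply rj_andl|auto].
   + eapply rj_cut; [apply rj_andr|auto].
 - apply rj_andI; [apply rj_refl| apply rj_top].
Qed.

Lemma flat_from A : RJ (bigand (flat A)) A.
Proof. induction A; simpl.
 - apply rj_andl.
 - apply rj_top.
 - apply rj_andI.
   + eapply rj_cut; [apply bigand_app_l|]. eapply rj_cut; [apply rj_andl|auto].
   + eapply rj_cut; [apply bigand_app_l|]. eapply rj_cut; [apply rj_andr|auto].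
 - apply rj_andl.
Qed.

Lemma ac A B : incl (flat B) (flat A) -> RJ A B.
Proof. intros H. eapply rj_cut; [apply flat_to|]. eapply rj_cut; [apply bigand_incl, H| apply flat_from]. Qed.

Ltac solve_incl := simpl; let x := fresh in let Hx := fresh in intros x Hx; simpl in Hx |- *; repeat rewrite in_app_iff in Hx; repeat rewrite in_app_iff; simpl in Hx |- *; tauto.

Definition dia (d : md * fm) : fm := Dia (fst d) (snd d).

Lemma dia_fwd a X l : (forall d, In d l -> md_le (fst d) a) ->
  RJ (Dia a (And X (bigand (map dia l)))) (And (Dia a X) (bigand (map dia l))).
Proof. intros H. apply rj_andI.
 - apply rj_mono, rj_andl.
 - apply bigand_intro. intros x Hx. apply in_map_iff in Hx. destruct Hx as [d [<- Hd]].
   eapply rj_cut. apply rj_mono. eapply rj_cut. apply rj_andr. apply bigand_elim. apply in_map. exact Hd.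
   unfold dia. apply rj_mon1. auto.
Qed.

Lemma dia_bwd a X l : (forall d, In d l -> md_lt (fst d) a) ->
  RJ (And (Dia a X) (bigand (map dia l))) (Dia a (And X (bigand (map dia l)))).
Proof. induction l as [|[m B] l IH]; simpl; intros H.
 - eapply rj_cut; [apply rj_andl|]. apply rj_mono. apply rj_andI; [apply rj_refl|apply rj_top].
 - eapply rj_cut.
   + apply rj_andI.
     * eapply rj_cut; [| apply IH; auto]. apply ac. solve_incl.
     * eapply rj_cut; [apply rj_andr| apply rj_andl].
   + eapply rj_cut. unfold dia at 1. apply rj_J. apply (H (m, B)); auto.
     apply rj_mono. apply ac. solve_incl.
Qed.

Lemma big_dia_eqv d l : rj_equiv (big_dia d l) (bigand (map dia (d :: l))).
Proof. revert d; induction l as [|d' l IH]; intros d; simpl.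
 - split. apply rj_andI; [apply rj_refl|apply rj_top]. apply rj_andl.
 - destruct (IH d') as [H1 H2]. simpl in H1, H2. split.
   + apply rj_andI; [apply rj_andl|]. eapply rj_cut; [apply rj_andr|exact H1].
   + apply rj_andI; [apply rj_andl|]. eapply rj_cut; [apply rj_andr|exact H2].
Qed.

Lemma build_eqv F l : rj_equiv (build F l) (bigand (F :: map dia l)).
Proof. destruct l as [|d l]; simpl.
 - split. apply rj_andI; [apply rj_refl|apply rj_top]. apply rj_andl.
 - destruct (big_dia_eqv d l) as [H1 H2]. simpl in H1, H2. split.
   + apply rj_andI; [apply rj_andl|]. eapply rj_cut; [apply rj_andr|exact H1].
   + apply rj_andI; [apply rj_andl|]. eapply rj_cut; [apply rj_andr|exact H2].
Qed.

Fixpoint insert (d : md*fm) (l : list (md*fm)) :=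
  match l with
  | [] => [d]
  | e :: l' => if md_leb (fst e) (fst d) then d :: l else e :: insert d l'
  end.
Fixpoint isort l := match l with [] => [] | d :: l' => insert d (isort l') end.

Lemma insert_in d l x : In x (insert d l) <-> d = x \/ In x l.
Proof. induction l; simpl. tauto. destruct (md_leb (fst a) (fst d)); simpl; rewrite ?IHl; tauto. Qed.

Lemma isort_in l x : In x (isort l) <-> In x l.
Proof. induction l; simpl. tauto. rewrite insert_in, IHl; tauto. Qed.

Lemma insert_sorted d l : nonincr (map fst l) -> nonincr (map fst (insert d l)).
Proof. induction l as [|e l IH]; simpl; intros H; auto.
 destruct (md_leb (fst e) (fst d)) eqn:E; simpl.
 - split. apply md_leb_iff; auto. exact H.
 - destruct l as [|e' l'].
   + simpl. split; auto. apply md_leb_false in E. tauto.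
   + simpl in H, IH |- *. destruct H as [He' H]. specialize (IH H).
     destruct (md_leb (fst e') (fst d)) eqn:E'; simpl in IH |- *.
     * split; [apply md_leb_false in E; tauto| exact IH].
     * split; [exact He'| exact IH].
Qed.

Lemma isort_sorted l : nonincr (map fst (isort l)).
Proof. induction l; simpl; auto. apply insert_sorted; auto. Qed.

Lemma nonincr_tail a l : nonincr (a :: l) -> nonincr l.
Proof. destruct l; simpl; tauto. Qed.

Lemma nonincr_app l1 l2 : nonincr (l1 ++ l2) -> nonincr l1 /\ nonincr l2.
Proof. induction l1 as [|a l1 IH]; simpl; intros H. split; auto.
 destruct l1 as [|b l1]; simpl in *.
 - split; auto. eapply nonincr_tail; eauto.
 - destruct H as [H1 H2]. destruct (IH H2). tauto.
Qed.

Lemma nonincr_bound l : forall a, nonincr (a :: l) -> forall y, In y l -> md_le y a.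
Proof. induction l as [|b l IH]; simpl; intros a H y Hy. contradiction.
 destruct H as [Hba Hl]. destruct Hy as [<-|Hy]. auto.
 apply md_le_trans with b; auto. Qed.

Fixpoint hi a (l : list (md*fm)) :=
  match l with [] => [] | d :: l' => if md_leb a (fst d) then d :: hi a l' else [] end.
Fixpoint lo a (l : list (md*fm)) :=
  match l with [] => [] | d :: l' => if md_leb a (fst d) then lo a l' else l end.

Lemma hi_lo a l : hi a l ++ lo a l = l.
Proof. induction l as [|d l IH]; simpl; auto. destruct (md_leb a (fst d)); simpl; congruence. Qed.

Lemma hi_ge a l d : In d (hi a l) -> md_le a (fst d).
Proof. induction l as [|e l IH]; simpl; [tauto|]. destruct (md_leb a (fst e)) eqn:E; simpl; [|tauto].
 intros [<-|H]; auto. apply md_leb_iff; auto. Qed.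

Lemma lo_head a l : match lo a l with [] => True | e :: _ => md_leb a (fst e) = false end.
Proof. induction l as [|d l IH]; simpl; auto. destruct (md_leb a (fst d)) eqn:E; auto. Qed.

Lemma lo_lt a l : nonincr (map fst l) -> forall d, In d (lo a l) -> md_lt (fst d) a.
Proof. intros Hs. pose proof (lo_head a l) as Hh.
 rewrite <- (hi_lo a l), map_app in Hs. apply nonincr_app in Hs. destruct Hs as [_ Hs].
 destruct (lo a l) as [|e L]; simpl; [tauto|].
 apply md_leb_false in Hh. destruct Hh as [_ Hh].
 intros d [<-|Hd].
 - apply not_le_lt; auto.
 - apply not_le_lt. intros Hc. apply Hh. apply md_le_trans with (fst d); auto.
   simpl in Hs. apply (nonincr_bound (map fst L) (fst e) Hs). apply in_map; auto.
Qed.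

Lemma in_L_ge_mono a b A : md_le a b -> in_L_ge b A -> in_L_ge a A.
Proof. induction A; simpl; intuition. eapply md_le_trans; eauto. Qed.

Lemma var_conj_L m F : var_conj F -> in_L_ge m F.
Proof. induction F; simpl; intuition. Qed.

Lemma fact_L m F : is_fact F -> in_L_ge m F.
Proof. destruct 1 as [->|H]; simpl; auto. apply var_conj_L; auto. Qed.

Lemma big_dia_L a l : forall d, (forall d', In d' (d::l) -> md_le a (fst d') /\ in_L_ge a (snd d')) -> in_L_ge a (big_dia d l).
Proof. induction l; simpl; intros d H.
 - apply H; auto.
 - split. apply H; auto. apply IHl. intros d' [<-|Hd']; apply H; auto.
Qed.

Lemma build_L a F l : is_fact F -> (forall d, In d l -> md_le a (fst d) /\ in_L_ge a (snd d)) -> in_L_ge a (build F l).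
Proof. destruct l; simpl; intros; [apply fact_L; auto| split; [apply fact_L; auto| apply big_dia_L; auto]]. Qed.

Definition fact_and (F G : fm) : fm :=
  match F with Top => G | _ => match G with Top => F | _ => And F G end end.

Lemma fact_and_fact F G : is_fact F -> is_fact G -> is_fact (fact_and F G).
Proof. unfold is_fact; intros HF HG; destruct F; destruct G; simpl in *; intuition discriminate. Qed.

Lemma fact_and_eqv F G : rj_equiv (fact_and F G) (And F G).
Proof. destruct F, G; split; apply ac; solve_incl. Qed.

Definition good (l : list (md*fm)) :=
  (forall d, In d l -> ordered (snd d) /\ in_L_ge (fst d) (snd d)) /\ nonincr (map fst l).

Lemma main A : exists F l, is_fact F /\ good l /\ RJ A (bigand (F :: map dia l)) /\ RJ (bigand (F :: map dia l)) A.
Proof.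
 induction A as [p| |A1 IH1 A2 IH2|a A IH].
 - exists (Var p), []. split. right; simpl; auto. split. split; simpl; tauto.
   split. apply rj_andI; [apply rj_refl|apply rj_top]. apply rj_andl.
 - exists Top, []. split. left; auto. split. split; simpl; tauto.
   split. apply rj_andI; apply rj_top. apply rj_top.
 - destruct IH1 as [F1 [l1 [HF1 [[Hl1 Hs1] [H1 H1']]]]].
   destruct IH2 as [F2 [l2 [HF2 [[Hl2 Hs2] [H2 H2']]]]].
   exists (fact_and F1 F2), (isort (l1 ++ l2)). split. apply fact_and_fact; auto.
   split. split. intros d Hd. apply isort_in, in_app_or in Hd. destruct Hd; auto. apply isort_sorted.
   destruct (fact_and_eqv F1 F2) as [E1 E2].
   split.
   + apply bigand_intro. intros x [<-|Hx].
     * eapply rj_cut; [|exact E2]. apply rj_andI.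
       -- eapply rj_cut; [apply rj_andl|]. eapply rj_cut; [exact H1| apply bigand_elim; left; auto].
       -- eapply rj_cut; [apply rj_andr|]. eapply rj_cut; [exact H2| apply bigand_elim; left; auto].
     * apply in_map_iff in Hx; destruct Hx as [d [<- Hd]]. apply isort_in, in_app_or in Hd. destruct Hd.
       -- eapply rj_cut; [apply rj_andl|]. eapply rj_cut; [exact H1|]. apply bigand_elim. right. apply in_map; auto.
       -- eapply rj_cut; [apply rj_andr|]. eapply rj_cut; [exact H2|]. apply bigand_elim. right. apply in_map; auto.
   + apply rj_andI.
     * eapply rj_cut; [|exact H1']. apply bigand_intro. intros x [<-|Hx].
       -- eapply rj_cut; [apply bigand_elim; left; reflexivity|]. eapply rj_cut; [exact E1| apply rj_andl].
       -- apply in_map_iff in Hx; destruct Hx as [d [<- Hd]]. apply bigand_elim. right. apply in_map. apply isort_in, in_or_app; auto.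
     * eapply rj_cut; [|exact H2']. apply bigand_intro. intros x [<-|Hx].
       -- eapply rj_cut; [apply bigand_elim; left; reflexivity|]. eapply rj_cut; [exact E1| apply rj_andr].
       -- apply in_map_iff in Hx; destruct Hx as [d [<- Hd]]. apply bigand_elim. right. apply in_map. apply isort_in, in_or_app; auto.
 - destruct IH as [F [l [HF [[Hl Hs] [H1 H2]]]]].
   exists Top, ((a, build F (hi a l)) :: lo a l).
   assert (Happ : hi a l ++ lo a l = l) by apply hi_lo.
   assert (Hs' := Hs). rewrite <- Happ, map_app in Hs'. apply nonincr_app in Hs'. destruct Hs' as [Shi Slo].
   assert (Hlt : forall d, In d (lo a l) -> md_lt (fst d) a) by (apply lo_lt; auto).
   assert (Hinhi : forall d, In d (hi a l) -> In d l) by (intros d Hd; rewrite <- Happ; apply in_or_app; auto).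
   assert (Hinlo : forall d, In d (lo a l) -> In d l) by (intros d Hd; rewrite <- Happ; apply in_or_app; auto).
   split. left; auto.
   split. split.
   + intros d [<-|Hd]; simpl.
     * split. apply ordered_mk; auto.
       apply build_L; auto. intros d Hd. split. apply hi_ge with l; auto.
       destruct (Hl d) as [_ HL]; auto. apply in_L_ge_mono with (fst d); auto. apply hi_ge with l; auto.
     * apply Hl; auto.
   + simpl. revert Slo Hlt. destruct (lo a l) as [|e L]; simpl; auto. intros Slo Hlt.
     split; auto. destruct (Hlt e) as [Hle _]; [left; auto| exact Hle].
   + assert (Hincl1 : incl (F :: map dia (hi a l)) (F :: map dia l)).
     { rewrite <- Happ at 2. rewrite map_app. solve_incl. }
     assert (Hincl2 : incl (map dia (lo a l)) (F :: map dia l)).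
     { rewrite <- Happ at 2. rewrite map_app. solve_incl. }
     assert (Hincl3 : incl (F :: map dia l) ((F :: map dia (hi a l)) ++ map dia (lo a l))).
     { rewrite <- Happ at 1. rewrite map_app. solve_incl. }
     destruct (build_eqv F (hi a l)) as [B1 B2].
     assert (Hle : forall d, In d (lo a l) -> md_le (fst d) a) by (intros d Hd; apply Hlt; auto).
     split.
     * eapply rj_cut. apply rj_mono, H1.
       eapply rj_cut. apply rj_mono. apply rj_andI; apply bigand_incl; [exact Hincl1|exact Hincl2].
       eapply rj_cut. apply dia_fwd; auto.
       eapply rj_cut with (B := And (Dia a (build F (hi a l))) (bigand (map dia (lo a l)))).
       -- apply rj_andI; [eapply rj_cut; [apply rj_andl| apply rj_mono, B2] | apply rj_andr].
       -- apply ac. solve_incl.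
     * eapply rj_cut with (B := And (Dia a (build F (hi a l))) (bigand (map dia (lo a l)))).
       { apply ac. solve_incl. }
       eapply rj_cut with (B := And (Dia a (bigand (F :: map dia (hi a l)))) (bigand (map dia (lo a l)))).
       { apply rj_andI; [eapply rj_cut; [apply rj_andl| apply rj_mono, B1] | apply rj_andr]. }
       eapply rj_cut. apply dia_bwd; auto.
       apply rj_mono. eapply rj_cut; [|exact H2]. apply bigand_app_r. exact Hincl3.
Qed.

Theorem lemma5p3 : forall A : fm, exists A' : fm, ordered A' /\ RJ A A' /\ RJ A' A.
Proof.
  intro A. destruct (main A) as [F [l [HF [[Hl Hs] [H1 H2]]]]].
  exists (build F l). destruct (build_eqv F l) as [B1 B2].
  split. apply ordered_mk; auto. split; eapply rj_cut; eauto.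
Qed.
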